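(* Let $G=G_1\times\dots\times G_n$ be a finite group, where the subgroups $G_1,\ldots,G_n$ have pairwise coprime orders. For $\ell\in\mathbb{N}$, the group $G$ is $\ell$-tuple regular if and only if each of $G_1,\ldots,G_n$ is $\ell$-tuple regular.
   Context: For $\ell\in\mathbb{N}$, a finite group $G$ is $\ell$-tuple regular if for all tuples $(g_1,\ldots,g_\ell),(h_1,\ldots,h_\ell)\in G^\ell$ (entries may repeat) for which $g_i\mapsto h_i$ defines an isomorphism $\langle g_1,\ldots,g_\ell\rangle\to\langle h_1,\ldots,h_\ell\rangle$, there exists a bijection $\Psi\colon G\to G$ such that for every $g\in G$ the assignment $g_1\mapsto h_1,\ldots,g_\ell\mapsto h_\ell,g\mapsto\Psi(g)$ defines an isomorphism $\langle g_1,\ldots,g_\ell,g\rangle\to\langle h_1,\ldots,h_\ell,\Psi(g)\rangle$. *)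

(* Defs.v *)
From mathcomp Require Import all_boot all_fingroup all_solvable.
Set Implicit Arguments. Unset Strict Implicit. Unset Printing Implicit Defensive.
Import GroupScope.

Section TupleRegular.
Variable gT : finGroupType.

Definition gen_of (k : nat) (x : 'I_k -> gT) : {group gT} :=
  <<[set x i | i : 'I_k]>>%G.

Definition assign_iso (k : nat) (x y : 'I_k -> gT) : Prop :=
  exists f : {morphism gen_of x >-> gT},
    isom (gen_of x) (gen_of y) f /\ forall i, f (x i) = y i.

Definition ext (k : nat) (x : 'I_k -> gT) (g : gT) : 'I_k.+1 -> gT :=
  fun i => if unlift ord_max i is Some j then x j else g.

Definition tuple_regular (l : nat) (G : {group gT}) : Prop :=
  forall x y : 'I_l -> gT,
    (forall i, x i \in G) -> (forall i, y i \in G) ->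
    assign_iso x y ->
    exists Psi : gT -> gT,
      [/\ Psi @: G = G, {in G &, injective Psi} &
          forall g, g \in G -> assign_iso (ext x g) (ext y (Psi g))].

End TupleRegular.

(* Main.v *)
Require Import Defs.
From mathcomp Require Import all_boot all_fingroup all_solvable.
Set Implicit Arguments. Unset Strict Implicit. Unset Printing Implicit Defensive.
Import GroupScope.

Section Aux.
Variable gT : finGroupType.
Implicit Types A B G D : {group gT}.

Lemma assign_isoP k (x y : 'I_k -> gT) :
  assign_iso x y <-> exists (D : {group gT}) (f : {morphism D >-> gT}),
    [/\ 'injm f, forall i, x i \in D & forall i, f (x i) = y i].
Proof.
split.
  case=> f [iso fx]; exists (gen_of x), f; split => //.
    by case/isomP: iso.
  by move=> i; rewrite mem_gen // imset_f.
case=> D [f [inj xD fx]].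
have sXD : gen_of x \subset D.
  by rewrite gen_subG; apply/subsetP => _ /imsetP[i _ ->].
exists (restrm_morphism sXD f); split => //.
apply/isomP; split; first exact: injm_restrm.
rewrite restrmEsub // /gen_of /= morphim_gen; last first.
  by apply/subsetP => _ /imsetP[i _ ->].
rewrite morphimEsub; last by apply/subsetP => _ /imsetP[i _ ->].
by rewrite -imset_comp; congr <<_>>; apply: eq_imset => i /=.
Qed.

Lemma assign_iso_eq k (x x' y y' : 'I_k -> gT) :
  x =1 x' -> y =1 y' -> assign_iso x y -> assign_iso x' y'.
Proof.
move=> ex ey H; have [D [f [inj xD fx]]] := (proj1 (assign_isoP x y) H).
apply/(assign_isoP x' y').
by exists D, f; split => // i; rewrite -?ex -?ey.
Qed.


Lemma assign_iso_constt rho k (x y : 'I_k -> gT) :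
  assign_iso x y -> assign_iso (fun i => (x i).`_rho) (fun i => (y i).`_rho).
Proof.
move=> H; have [D [f [inj xD fx]]] := (proj1 (assign_isoP x y) H).
apply/assign_isoP; exists D, f; split => // i.
  by have := cycle_constt rho (x i); apply/subsetP; rewrite cycle_subG.
by rewrite morph_constt // fx.
Qed.

Lemma ext_in k (x : 'I_k -> gT) g (S : {set gT}) :
  (forall i, x i \in S) -> g \in S -> forall i, ext x g i \in S.
Proof. by move=> xS gS i; rewrite /ext; case: unlift. Qed.

Lemma ext_max k (x : 'I_k -> gT) g : ext x g ord_max = g.
Proof. by rewrite /ext unlift_none. Qed.

Section Two.
Variables (pi : nat_pred) (A B G : {group gT}).
Hypotheses (defG : A \x B = G) (pA : pi.-group A) (pB : pi^'.-group B).

Lemma hall_of (rho : nat_pred) (A1 B1 : {group gT}) :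
  A1 \x B1 = G -> rho.-group A1 -> rho^'.-group B1 -> rho.-Hall(G) A1.
Proof.
move=> dG pA1 pB1; rewrite /pHall.
have sAG : A1 \subset G by rewrite -(dprodW dG) mulG_subl.
rewrite sAG pA1 /= -divgS // -(dprod_card dG) mulKn //.
Qed.

Lemma hallA : pi.-Hall(G) A.
Proof. exact: hall_of defG pA pB. Qed.

Lemma hallB : pi^'.-Hall(G) B.
Proof.
have dG : B \x A = G by rewrite dprodC.
by apply: hall_of dG pB _; rewrite pgroupNK.
Qed.

Lemma nA : A <| G. Proof. by case: (dprod_normal2 defG). Qed.
Lemma nB : B <| G. Proof. by case: (dprod_normal2 defG). Qed.
Lemma sAG : A \subset G. Proof. by case/andP: nA. Qed.
Lemma sBG : B \subset G. Proof. by case/andP: nB. Qed.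

Lemma memA x : x \in G -> (x \in A) = pi.-elt x.
Proof. exact: mem_normal_Hall hallA nA. Qed.
Lemma memB x : x \in G -> (x \in B) = pi^'.-elt x.
Proof. exact: mem_normal_Hall hallB nB. Qed.

Lemma constt_in x rho : x \in G -> x.`_rho \in G.
Proof.
by move=> xG; have := cycle_constt rho x; apply/subsetP; rewrite cycle_subG.
Qed.

Lemma cA x : x \in G -> x.`_pi \in A.
Proof. by move=> xG; rewrite memA ?constt_in ?p_elt_constt. Qed.
Lemma cB x : x \in G -> x.`_pi^' \in B.
Proof. by move=> xG; rewrite memB ?constt_in ?p_elt_constt. Qed.

Lemma commAB a b : a \in A -> b \in B -> commute a b.
Proof.
move=> aA bB; have [_ _ cAB _] := dprodP defG.
by have /centP cb := subsetP cAB b bB; apply/commute_sym/cb.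
Qed.


Lemma cMA a b : a \in A -> b \in B -> (a * b).`_pi = a.
Proof.
move=> aA bB; rewrite consttM; last exact: commAB.
rewrite (constt_p_elt (mem_p_elt pA aA)).
by rewrite (constt1P (mem_p_elt pB bB)) mulg1.
Qed.

Lemma cMB a b : a \in A -> b \in B -> (a * b).`_pi^' = b.
Proof.
move=> aA bB; rewrite consttM; last exact: commAB.
rewrite (constt_p_elt (mem_p_elt pB bB)).
have pa : pi^'^'.-elt a by rewrite /p_elt pnatNK; exact: (mem_p_elt pA aA).
by rewrite (constt1P pa) mul1g.
Qed.


Lemma gen_sub k (x : 'I_k -> gT) (S : {group gT}) :
  (forall i, x i \in S) -> gen_of x \subset S.
Proof. by move=> xS; rewrite gen_subG; apply/subsetP => _ /imsetP[i _ ->]. Qed.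

Lemma gen_mem k (x : 'I_k -> gT) i : x i \in gen_of x.
Proof. by rewrite mem_gen // imset_f. Qed.

Lemma L2 k (x y : 'I_k -> gT) :
  (forall i, x i \in G) -> (forall i, y i \in G) ->
  assign_iso (fun i => (x i).`_pi) (fun i => (y i).`_pi) ->
  assign_iso (fun i => (x i).`_pi^') (fun i => (y i).`_pi^') ->
  assign_iso x y.
Proof.
move=> xG yG [fA [isoA fAx]] [fB [isoB fBx]].
have [_ _ cAB tAB] := dprodP defG.
set XA := gen_of _ in fA isoA fAx; set XB := gen_of _ in fB isoB fBx.
have sXA : XA \subset A by apply: gen_sub => i; apply: cA.
have sXB : XB \subset B by apply: gen_sub => i; apply: cB.
have sYA : gen_of (fun i => (y i).`_pi) \subset A by apply: gen_sub => i; apply: cA.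
have sYB : gen_of (fun i => (y i).`_pi^') \subset B by apply: gen_sub => i; apply: cB.
case/isomP: isoA => injA imA; case/isomP: isoB => injB imB.
have cX : XB \subset 'C(XA) by apply: subset_trans sXB (subset_trans cAB (centS sXA)).
have tX : XA :&: XB = 1.
  by apply/trivgP; rewrite -tAB; apply: setISS.
have defX := dprodEY cX tX.
have cf : fB @* XB \subset 'C(fA @* XA).
  by rewrite imA imB; apply: subset_trans sYB (subset_trans cAB (centS sYA)).
set f := dprodm defX cf.
have injf : 'injm f.
  rewrite injm_dprodm injA injB imA imB /=; apply/eqP/trivgP.
  by rewrite -tAB; apply: setISS.
apply/assign_isoP; exists (XA <*> XB)%G, [morphism of f]; split => // i.
  rewrite -(consttC pi (x i)) groupM //.
    by apply/(subsetP (joing_subl _ _))/gen_mem.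
  by apply/(subsetP (joing_subr _ _))/gen_mem.
rewrite -(consttC pi (x i)) /= /f dprodmE ?gen_mem //.
by rewrite fAx fBx consttC.
Qed.


Lemma bij_card (Psi : gT -> gT) (S : {group gT}) :
  (forall g, g \in S -> Psi g \in S) -> {in S &, injective Psi} -> Psi @: S = S.
Proof.
move=> PS inj; apply/eqP; rewrite eqEcard card_in_imset // leqnn andbT.
by apply/subsetP => _ /imsetP[g gS ->]; apply: PS.
Qed.

Lemma dir1 l : tuple_regular l G -> tuple_regular l A.
Proof.
move=> TR x y xA yA iso.
have [Psi [PG Pinj Piso]] := TR x y (fun i => subsetP sAG _ (xA i))
   (fun i => subsetP sAG _ (yA i)) iso.
have PA : forall g, g \in A -> Psi g \in A.
  move=> g gA; have gG := subsetP sAG _ gA.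
  have PgG : Psi g \in G by rewrite -PG imset_f.
  rewrite memA //.
  have [D [f [inj xD fx]]] := proj1 (assign_isoP _ _) (Piso g gG).
  have := fx ord_max; rewrite (ext_max x g) (ext_max y (Psi g)) => <-.
  rewrite /p_elt order_injm //; last by have := xD ord_max; rewrite ext_max.
  exact: (mem_p_elt pA gA).
have injA : {in A &, injective Psi}.
  by move=> a b aA bA; apply: Pinj; apply: (subsetP sAG).
exists Psi; split => //.
- exact: bij_card.
- by move=> g gA; apply: Piso; apply: (subsetP sAG).
Qed.


Lemma dir2 l : tuple_regular l A -> tuple_regular l B -> tuple_regular l G.
Proof.
move=> TRA TRB x y xG yG iso.
have [PA [PAim PAinj PAiso]] := TRA (fun i => (x i).`_pi) (fun i => (y i).`_pi)
  (fun i => cA (xG i)) (fun i => cA (yG i)) (assign_iso_constt pi iso).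
have [PB [PBim PBinj PBiso]] := TRB (fun i => (x i).`_pi^') (fun i => (y i).`_pi^')
  (fun i => cB (xG i)) (fun i => cB (yG i)) (assign_iso_constt pi^' iso).
have PAA : forall a, a \in A -> PA a \in A by move=> a aA; rewrite -PAim imset_f.
have PBB : forall b, b \in B -> PB b \in B by move=> b bB; rewrite -PBim imset_f.
pose Psi g := PA g.`_pi * PB g.`_pi^'.
have PsiA g : g \in G -> (Psi g).`_pi = PA g.`_pi.
  by move=> gG; rewrite cMA ?PAA ?PBB ?cA ?cB.
have PsiB g : g \in G -> (Psi g).`_pi^' = PB g.`_pi^'.
  by move=> gG; rewrite cMB ?PAA ?PBB ?cA ?cB.
have PsiG g : g \in G -> Psi g \in G.
  by move=> gG; rewrite -(dprodW defG) mem_mulg ?PAA ?PBB ?cA ?cB.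
have injP : {in G &, injective Psi}.
  move=> g h gG hG eq.
  have e1 : g.`_pi = h.`_pi.
    by apply: PAinj; rewrite ?cA // -PsiA // -[RHS]PsiA // eq.
  have e2 : g.`_pi^' = h.`_pi^'.
    by apply: PBinj; rewrite ?cB // -PsiB // -[RHS]PsiB // eq.
  by rewrite -(consttC pi g) -(consttC pi h) e1 e2.
exists Psi; split => //; first exact: bij_card.
move=> g gG; apply: L2.
- exact: ext_in.
- exact: ext_in (PsiG _ gG).
- apply: assign_iso_eq (PAiso _ (cA gG)) => i; rewrite /ext; case: unlift => //.
  by rewrite PsiA.
- apply: assign_iso_eq (PBiso _ (cB gG)) => i; rewrite /ext; case: unlift => //.
  by rewrite PsiB.
Qed.

End Two.
End Aux.

Lemma assign_iso_refl (gT : finGroupType) k (x : 'I_k -> gT) : assign_iso x x.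
Proof.
apply/assign_isoP; exists [set: gT]%G, [morphism of idm [set: gT]]; split => //.
- exact: injm_idm.
- by move=> i; rewrite inE.
Qed.

Lemma two (gT : finGroupType) (pi : nat_pred) (A B G : {group gT}) l :
  A \x B = G -> pi.-group A -> pi^'.-group B ->
  tuple_regular l G <-> tuple_regular l A /\ tuple_regular l B.
Proof.
move=> dG pA pB; split.
  move=> T; split; first exact: (dir1 dG pA pB T).
  have dG' : B \x A = G by rewrite dprodC.
  have pA' : pi^'^'.-group A by rewrite pgroupNK.
  exact: (dir1 dG' pB pA' T).
by case=> TA TB; exact: (dir2 dG pA pB TA TB).
Qed.

Theorem corollary3p3 (gT : finGroupType) (n l : nat) (G : {group gT})
    (Gs : 'I_n -> {group gT}) :
  \big[dprod/1]_(i < n) Gs i = G ->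
  (forall i j : 'I_n, i != j -> coprime #|Gs i| #|Gs j|) ->
  tuple_regular l G <-> (forall i : 'I_n, tuple_regular l (Gs i)).
Proof.
elim: n G Gs => [|n IH] G Gs.
  rewrite big_ord0 => G1 _; split => [_ [] //|_].
  move=> x y xG yG _; exists id; split => //; first by rewrite imset_id.
  move=> g gG; apply: assign_iso_eq (assign_iso_refl (ext x g)) => // i.
  have := ext_in xG gG i; have := ext_in yG gG i.
  by rewrite -G1 !inE => /eqP -> /eqP ->.
rewrite big_ord_recl => dG cop.
have [[_ H _ defH] _ _ _] := dprodP dG.
rewrite defH in dG.
have cop' : forall i j : 'I_n, i != j -> coprime #|Gs (lift ord0 i)| #|Gs (lift ord0 j)|.
  by move=> i j ne; apply: cop; rewrite (inj_eq (@lift_inj _ ord0)).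
have IH' := IH H (fun i => Gs (lift ord0 i)) defH cop'.
pose pi := \pi(#|Gs ord0|).
have pA : pi.-group (Gs ord0) by apply: pgroup_pi.
have pB : pi^'.-group H.
  rewrite /pgroup -(bigdprod_card defH).
  apply: (big_ind (fun m => pi^'.-nat m)) => //.
  - by move=> a b; rewrite pnatM => -> ->.
  move=> i _; rewrite -coprime_pi' ?cardG_gt0 //; exact: cop.
have T2 := two l dG pA pB; split.
  move/T2 => [T0 /IH' Ts] i; case: (unliftP ord0 i) => [j ->|->] //.
move=> T; apply/T2; split => //; apply/IH' => i; exact: T.
Qed.
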